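(* Every finite chordal trigraph admits a tree representation.
   Context: A trigraph is a triple $H'=(V,E_B,E_R)$ where $E_B,E_R$ are disjoint subsets of $\binom V2$, called black and red edges. For $u\ne v\in V$, the adjacency type of $uv$ is `black' if $uv\in E_B$, `red' if $uv\in E_R$, and `non-edge' otherwise. The total graph of $H'$ is $\mathcal T(H')=(V,E_B\cup E_R)$; $H'$ is chordal if its total graph has no induced cycle of length at least $4$. In a rooted tree, a node is its own ancestor and descendant; $\mathrm{ancestors}(v)$, $\mathrm{desc}(v)$, $\mathrm{parent}(v)$ have the usual meaning, and siblings are distinct nodes with the same parent. A tree representation of a chordal trigraph $H'$ with $H:=\mathcal T(H')$ is a rooted tree $T$ with $V(T)=V(H)$ (not necessarily a subgraph of $H$) such that: (1) for every $v\in V(H)$, $N_H(v)\cap \mathrm{ancestors}(v)$ is a clique in $H$; (2) for every non-root $v$, $N_H(v)\subseteq \mathrm{desc}(v)\cup(\mathrm{ancestors}(v)\cap N_H[\mathrm{parent}(v)])$; (3) if $u$ and $v$ are siblings in $T$, then $u$ and $v$ have a common ancestor $x$ such that $ux$ and $vx$ have distinct adjacency types in $H'$. *)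

(* Defs.v *)
From mathcomp Require Import all_boot.
Set Implicit Arguments. Unset Strict Implicit. Unset Printing Implicit Defensive.

(* A trigraph on a finite vertex type V: two relations black, red encoding
   the edge sets E_B, E_R as sets of unordered pairs of distinct vertices. *)
Definition is_trigraph (V : finType) (black red : rel V) : Prop :=
  [/\ symmetric black, symmetric red, irreflexive black, irreflexive red &
      forall u v, ~~ (black u v && red u v)].

Definition tadj (V : finType) (black red : rel V) : rel V :=
  fun u v => black u v || red u v.

Inductive adj_type := ATBlack | ATRed | ATNon.

Definition adjtype (V : finType) (black red : rel V) (u v : V) : adj_type :=
  if black u v then ATBlack else if red u v then ATRed else ATNon.

Definition induced_cycle (V : finType) (e : rel V) (c : seq V) : Prop :=
  uniq c /\
  forall (x0 : V) i j, i < size c -> j < size c -> i != j ->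
    e (nth x0 c i) (nth x0 c j)
     = ((j == i.+1 %% size c) || (i == j.+1 %% size c)).

Definition chordal_trigraph (V : finType) (black red : rel V) : Prop :=
  forall c : seq V, induced_cycle (tadj black red) c -> size c < 4.

(* A rooted tree with vertex set V, given by a parent function
   (par v = None iff v is the root). *)
Definition par_rel (V : finType) (par : V -> option V) : rel V :=
  fun x y => par x == Some y.

(* a is an ancestor of v (reflexive: v is its own ancestor) *)
Definition ancestor (V : finType) (par : V -> option V) (a v : V) : bool :=
  connect (par_rel par) v a.

(* par defines a rooted tree on V: every vertex reaches a root by following
   parents (so there are no cycles), and there is at most one root (exactly
   one when V is nonempty). *)
Definition rooted_tree (V : finType) (par : V -> option V) : Prop :=
  (forall v, exists2 r, par r = None & ancestor par r v) /\
  (forall r r', par r = None -> par r' = None -> r = r').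

Definition is_clique (V : finType) (e : rel V) (S : pred V) : Prop :=
  forall x y, S x -> S y -> x != y -> e x y.

Definition tree_representation (V : finType) (black red : rel V)
    (par : V -> option V) : Prop :=
  let H := tadj black red in
  [/\ rooted_tree par,
      (* (1) *)
      (forall v, is_clique H (fun u => H v u && ancestor par u v)),
      (* (2) *)
      (forall v p, par v = Some p -> forall u, H v u ->
         ancestor par v u || (ancestor par u v && ((u == p) || H p u))) &
      (* (3) *)
      (forall u v p, u != v -> par u = Some p -> par v = Some p ->
         exists x, [/\ ancestor par x u, ancestor par x v &
                      adjtype black red u x <> adjtype black red v x])].

(* Main.v *)
Require Import Defs.
From mathcomp Require Import all_boot zify.
From Stdlib Require Import Classical.
Set Implicit Arguments. Unset Strict Implicit. Unset Printing Implicit Defensive.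

Ltac nlia :=
  repeat match goal with
  | h : is_true (leq _ _) |- _ => revert h
  | h : @eq ?T _ _ |- _ => unify T nat; revert h
  | h : ~ (@eq ?T _ _) |- _ => unify T nat; revert h
  | h : is_true (leq _ _ && _) |- _ => revert h
  end;
  repeat match goal with h : _ |- _ => clear h end;
  lia.

Section Simp.
Variables (V : finType) (black red : rel V).
Hypothesis Htri : is_trigraph black red.
Hypothesis Hch : chordal_trigraph black red.
Notation H := (tadj black red).

Lemma Hsym : symmetric H.
Proof. case: Htri => sb sr _ _ _ x y; by rewrite /tadj sb sr. Qed.
Lemma Hirr : irreflexive H.
Proof. case: Htri => _ _ ib ir _ x; by rewrite /tadj ib ir. Qed.

Definition goodpath (D : pred V) (x y : V) (g : nat -> V) (k : nat) :=
  [/\ g 0 = x, g k = y, (forall t, 0 < t < k -> D (g t)) &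
      (forall t, t < k -> H (g t) (g t.+1))].

Lemma shortcut D x y g k i m : goodpath D x y g k -> i + m < k ->
  H (g i) (g (i + 1 + m)) ->
  goodpath D x y (fun t => if t <= i then g t else g (t + m)) (k - m).
Proof.
case=> g0 gk gD gH lt Hc; split.
- by rewrite leq0n.
- rewrite ifN; last by rewrite -ltnNge; nlia.
  by rewrite subnK //; nlia.
- move=> t /andP[t0 tk]; case: ifP => ti; apply: gD; nlia.
- move=> t tk /=; case: (ltngtP t i) => ti.
  + apply: gH; nlia.
  + rewrite addSn; apply: gH; nlia.
  + by subst t; rewrite addn1 in Hc.
Qed.

Section Cyc.
Variables (D : pred V) (a x y : V).
Hypotheses (aD : ~~ D a) (xD : ~~ D x) (yD : ~~ D y) (ax : H a x) (ay : H a y)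
  (xy : ~~ H x y) (xny : x != y) (aDn : forall z, D z -> ~~ H a z).

Lemma no_goodpath k g : goodpath D x y g k -> False.
Proof.
elim/ltn_ind: k g => k IH g gp.
case: (classic (exists i m, [/\ 0 < m, i + m < k & H (g i) (g (i + 1 + m))])).
  case=> i [m [m0 imk Hc]].
  apply: (IH (k - m) _ _ (shortcut gp imk Hc)); nlia.
move=> nsc.
have nochord : forall i j, i.+1 < j <= k -> ~~ H (g i) (g j).
  move=> i j ij; apply/negP => Hij; apply: nsc; exists i, (j - i.+1).
  split; try nlia. by have -> : i + 1 + (j - i.+1) = j by nlia.
case: gp => g0 gk gD gH.
have ginj0 : forall i j, i < j -> j <= k -> g i = g j -> False.
  move=> i j lij jk e.
  case: (posnP i) => [i0|ip].
    subst i; rewrite g0 in e.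
    case: (ltngtP j k) jk => // jk' _.
      have h : 0 < j < k by nlia.
      by move: (gD j h); rewrite -e (negbTE xD).
    by subst j; rewrite gk in e; move: xny; rewrite e eqxx.
  case: (ltngtP j k) jk => // jk' _.
    exfalso; apply: nsc; exists i, (j - i); split; try nlia.
    have -> : i + 1 + (j - i) = j.+1 by nlia.
    by rewrite e; apply: gH.
  subst j; rewrite gk in e.
  have h : 0 < i < k by nlia.
  by move: (gD i h); rewrite e (negbTE yD).
have ginj : forall i j, i <= k -> j <= k -> g i = g j -> i = j.
  move=> i j ik jk e; case: (ltngtP i j) => // h.
    by case: (ginj0 _ _ h jk e).
  by case: (ginj0 _ _ h ik (esym e)).
have k2 : 2 <= k.
  case: k gk gH {nochord ginj ginj0 IH nsc gD} => [|[|k]] //.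
    by move=> gk; move: xny; rewrite -gk g0 eqxx.
  by move=> gk gH; move: (gH 0 isT); rewrite g0 gk (negbTE xy).
pose f t := if t == 0 then a else g t.-1.
have := Hch (c := mkseq f k.+2).
rewrite size_mkseq; have -> : k.+2 < 4 = false by nlia.
move=> h; suff : false by []. apply: h; split.
  have ag : forall t, t <= k -> g t != a.
    move=> t tk; case: (posnP t) => t0.
      by rewrite t0 g0; apply/eqP => e; move: ax; rewrite e Hirr.
    case: (ltngtP t k) tk => // tk _.
      have h2 : 0 < t < k by nlia.
      by apply/eqP => e; move: (gD t h2); rewrite e (negbTE aD).
    by subst t; rewrite gk; apply/eqP => e; move: ay; rewrite e Hirr.
  apply/mkseq_uniqP => i j; rewrite !inE /f => ik jk.
  case: eqP => i0; case: eqP => j0 //.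
  - by move=> _; rewrite i0 j0.
  - move=> e; have h2 : j.-1 <= k by nlia.
    by move: (ag _ h2); rewrite -e eqxx.
  - move=> e; have h2 : i.-1 <= k by nlia.
    by move: (ag _ h2); rewrite e eqxx.
  - move=> e; have h3 : i.-1 <= k by nlia.
    have h4 : j.-1 <= k by nlia.
    have := ginj _ _ h3 h4 e; nlia.
move=> x0.
have main : forall i j, i < j -> j < k.+2 ->
   H (f i) (f j) = (j == i.+1) || ((i == 0) && (j == k.+1)).
  move=> i j ij jk; rewrite /f.
  case: eqP => i0.
    subst i; rewrite ifN; last by nlia.
    case: (posnP j.-1) => jj.
      by rewrite jj g0 ax; have -> : j = 1 by nlia.
    case: (ltngtP j.-1 k) => jjk; [|nlia|].
      rewrite (negbTE (aDn (gD _ _))); last by nlia.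
      by apply/esym/negbTE; nlia.
    rewrite jjk gk ay; have -> : j == k.+1 by nlia. by rewrite orbT.
  rewrite ifN; last by nlia.
  rewrite /=.
  rewrite ?orbF; case: eqP => jE.
    subst j; rewrite /=; have -> : i = i.-1.+1 by nlia.
    by apply: gH; nlia.
  by apply/negbTE/nochord; nlia.
move=> i j; rewrite size_mkseq => ik jk ij.
rewrite !nth_mkseq //.
case: (ltngtP i j) ij => // lij _.
  rewrite main //.
  rewrite (modn_small (m := i.+1)); last by nlia.
  case: (ltngtP j.+1 k.+2) => jk2; [|nlia|].
    rewrite modn_small //; have -> : (i == j.+1) = false by nlia.
    by have -> : (i == 0) && (j == k.+1) = false by nlia.
  rewrite jk2 modnn; have -> : (j == k.+1) = true by nlia. by rewrite andbT.
rewrite Hsym main //.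
rewrite (modn_small (m := j.+1)); last by nlia.
case: (ltngtP i.+1 k.+2) => jk2; [|nlia|].
  rewrite (modn_small (m := i.+1)) //; have -> : (j == i.+1) = false by nlia.
  have -> : (i == k.+1) = false by nlia. by rewrite andbF orbF.
rewrite jk2 modnn; have -> : (i == k.+1) = true by nlia. by rewrite andbT orbC.
Qed.
End Cyc.

Definition simpl (S : {set V}) v :=
  forall p q, p \in S -> q \in S -> H v p -> H v q -> p != q -> H p q.

Lemma Pthm n : forall S : {set V}, #|S| <= n -> forall a, a \in S ->
  (forall y, y \in S -> y = a \/ H a y) \/
  exists v, [/\ v \in S, v != a, ~~ H a v & simpl S v].
Proof.
elim: n => [|n IH] S cS a aS.
  by move: cS; rewrite leqn0 => /eqP/card0_eq/(_ a); rewrite aS.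
case: (classic (exists b, [/\ b \in S, b != a & ~~ H a b])); last first.
  move=> nb; left => y yS; apply: NNPP => hy; apply: nb; exists y; split=> //.
    by apply/eqP => e; apply: hy; left.
  by apply/negP => e; apply: hy; right.
case=> b [bS ba Hab].
set D := [set z in S | (z != a) && ~~ H a z].
set r := [rel u v | [&& u \in D, v \in D & H u v]].
have rsym : symmetric r by move=> u v; rewrite /r /= Hsym andbCA.
set C := [set z | connect r b z].
have bD : b \in D by rewrite inE bS ba.
have pathD : forall q u, u \in D -> path r u q -> forall z, z \in u :: q -> z \in D.
  elim=> [|w q IHq] u uD /=; first by move=> _ z; rewrite inE => /eqP ->.
  case/andP=> /and3P[_ wD _] pq z; rewrite inE => /orP[/eqP -> //|].
  exact: IHq.
have CD : forall z, z \in C -> z \in D.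
  move=> z0; rewrite inE => /connectP[q pq ->].
  apply: (pathD q b bD pq); exact: mem_last.
have Cclos : forall c w, c \in C -> w \in D -> H c w -> w \in C.
  move=> c w cC wD Hcw; rewrite inE; apply: (connect_trans (y := c)).
    by move: cC; rewrite inE.
  by apply: connect1; rewrite /r /= CD //= wD.
set N := [set z in S | (z \notin C) && [exists c in C, H c z]].
have DS : forall z, z \in D -> z \in S by move=> z; rewrite inE => /andP[].
have DaH : forall z, z \in D -> ~~ H a z.
  by move=> z; rewrite inE => /and3P[].
have NaH : forall z, z \in N -> H a z.
  move=> z; rewrite inE => /and3P[zS zC /existsP[c /andP[cC Hcz]]].
  case: (boolP (z \in D)) => zD; first by move: zC; rewrite (Cclos c z).
  move: zD; rewrite inE zS /= negb_and !negbK => /orP[/eqP za|//].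
  by move: (DaH c (CD c cC)); rewrite -za Hsym Hcz.
have NS : forall z, z \in N -> z \in S by move=> u; rewrite inE => /andP[].
have aD : a \notin D by rewrite inE eqxx andbF.
have Nclq : forall x y, x \in N -> y \in N -> x != y -> H x y.
  move=> x y xN yN xy; apply: contraT => nHxy; exfalso.
  have xD : x \notin D by apply/negP => /DaH; rewrite NaH.
  have yD : y \notin D by apply/negP => /DaH; rewrite NaH.
  move: (xN) (yN); rewrite !inE => /and3P[_ _ /existsP[c1 /andP[c1C Hc1x]]].
  move=> /and3P[_ _ /existsP[c2 /andP[c2C Hc2y]]].
  have : connect r c1 c2.
    apply: (connect_trans (y := b)).
      by rewrite (sym_connect_sym rsym); move: c1C; rewrite inE.
    by move: c2C; rewrite inE.
  case/connectP => q pq c2E.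
  have c1D := CD _ c1C.
  have allD := pathD q c1 c1D pq.
  pose g t := if t == 0 then x else if t <= size q + 1 then nth x (c1 :: q) t.-1 else y.
  apply: (@no_goodpath (mem D) a x y aD xD yD (NaH _ xN) (NaH _ yN) nHxy xy
            (fun z zD => DaH z zD) (size q + 2) g).
  split.
  - by [].
  - rewrite /g; have -> : (size q + 2 == 0) = false by nlia.
    by have -> : (size q + 2 <= size q + 1) = false by nlia.
  - move=> t /andP[t0 tk]; rewrite /g.
    have -> : (t == 0) = false by nlia.
    have -> : (t <= size q + 1) = true by nlia.
    by apply: allD; apply: mem_nth => /=; nlia.
  - move=> t tk; rewrite /g.
    case: (posnP t) => [->|t0].
      by rewrite addn1 /= Hsym.
    have -> : (t <= size q + 1) = true by nlia.
    have -> : (t.+1 == 0) = false by nlia.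
    case: (ltngtP t (size q).+1) => tq; [|nlia|].
      have -> : (t.+1 <= size q + 1) = true by nlia.
      move/(pathP x): pq => /(_ t.-1) h.
      have ht : t.-1 < size q by nlia.
      have := h ht; rewrite /r /= => /and3P[_ _].
      by have -> : t = t.-1.+1 by nlia.
    have -> : (t.+1 <= size q + 1) = false by nlia.
    rewrite tq /=.
    have := nth_last x (c1 :: q); rewrite /= => ->.
    by rewrite -c2E.
set S' := C :|: N.
have S'S : S' \proper S.
  apply/properP; split.
    apply/subsetP => z; rewrite inE => /orP[/CD/DS|/NS] //.
  exists a => //; rewrite inE negb_or; apply/andP; split.
    by apply/negP => /CD; apply/negP.
  by apply/negP => /NaH; rewrite Hirr.
have cS' : #|S'| <= n by have := proper_card S'S; nlia.
have CS : C \proper S.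
  apply/properP; split.
    by apply/subsetP => z /CD/DS.
  by exists a => //; apply/negP => /CD; apply/negP.
have cC : #|C| <= n by have := proper_card CS; nlia.
have nbr : forall v p, v \in C -> p \in S -> H v p -> (p \in C) || (p \in N).
  move=> v p vC pS Hvp; case: (boolP (p \in D)) => pD.
    by rewrite (Cclos v p).
  have pC : p \notin C by apply/negP => /CD; apply/negP.
  rewrite orbC inE pS pC /=; apply/orP; left; apply/existsP; exists v; by rewrite vC.
have fin : forall v, v \in C ->
    (forall p q, p \in S' -> q \in S' -> H v p -> H v q -> p != q -> H p q) ->
    exists v, [/\ v \in S, v != a, ~~ H a v & simpl S v].
  move=> v vC hv; exists v; have vD := CD _ vC; split.
  - exact: DS.
  - by apply/eqP => e; move: vD aD; rewrite e => ->.
  - exact: DaH.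
  - move=> p q pS qS Hvp Hvq pq; apply: hv => //; rewrite inE.
    + exact: (nbr v p vC pS Hvp).
    + exact: (nbr v q vC qS Hvq).
right.
case: (classic (exists x, x \in N /\ exists y, [/\ y \in S', y != x & ~~ H x y])).
  case=> x [xN [y [yS' yx nHxy]]].
  have xS' : x \in S' by rewrite inE xN orbT.
  case: (IH S' cS' x xS').
    by move=> /(_ y yS') [e|h]; [move: yx; rewrite e eqxx|move: nHxy; rewrite h].
  case=> v [vS' vx nHxv sv].
  have vC : v \in C.
    move: vS'; rewrite inE => /orP[//|vN].
    by move: nHxv; rewrite Nclq // eq_sym.
  by apply: (fin v vC) => p q pS qS Hvp Hvq pq; apply: sv.
move=> nA.
have NB : forall x y, x \in N -> y \in S' -> y = x \/ H x y.
  move=> x y xN yS'; apply: NNPP => h; apply: nA; exists x; split=> //; exists y.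
  split=> //; first by apply/eqP => e; apply: h; left.
  by apply/negP => e; apply: h; right.
have finC : forall v, v \in C ->
    (forall p q, p \in C -> q \in C -> H v p -> H v q -> p != q -> H p q) ->
    exists v, [/\ v \in S, v != a, ~~ H a v & simpl S v].
  move=> v vC hv; apply: (fin v vC) => p q pS qS Hvp Hvq pq.
  move: pS qS; rewrite !in_setU => /orP[pC|pN] /orP[qC|qN].
  - exact: hv.
  - case: (NB q p qN); first by rewrite in_setU pC.
      by move=> e; move: pq; rewrite e eqxx.
    by rewrite Hsym.
  - case: (NB p q pN); first by rewrite in_setU qC.
      by move=> e; move: pq; rewrite e eqxx.
    by [].
  - exact: Nclq.
case: (classic (exists y z, [/\ y \in C, z \in C, z != y & ~~ H y z])).
  case=> y [z [yC zC zy nHyz]].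
  case: (IH C cC y yC).
    by move=> /(_ z zC) [e|h]; [move: zy; rewrite e eqxx|move: nHyz; rewrite h].
  case=> v [vC _ _ sv]; apply: (finC v vC) => p q pC qC; exact: sv.
move=> nB; have bC : b \in C by rewrite inE connect0.
apply: (finC b bC) => p q pC qC _ _ pq; apply: NNPP => h; apply: nB.
by exists p, q; split=> //; [rewrite eq_sym | apply/negP].
Qed.

Lemma simplicial_exists (S : {set V}) : S != set0 -> exists2 v, v \in S & simpl S v.
Proof.
case/set0Pn => a aS.
case: (classic (exists x y, [/\ x \in S, y \in S, y != x & ~~ H x y])).
  case=> x [y [xS yS yx nH]].
  case: (Pthm (leqnn #|S|) xS).
    by move=> /(_ y yS) [e|h]; [move: yx; rewrite e eqxx|move: nH; rewrite h].
  by case=> v [vS _ _ sv]; exists v.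
move=> nc; exists a => // p q pS qS _ _ pq; apply: NNPP => h; apply: nc.
by exists p, q; split=> //; [rewrite eq_sym | apply/negP].
Qed.
End Simp.
Section Tree.
Variables (V : finType) (black red : rel V).
Hypothesis Htri : is_trigraph black red.
Notation H := (tadj black red).
Let Hsym := Hsym Htri.
Let Hirr := Hirr Htri.

Section Anc.
Variable par : V -> option V.

Lemma anc_refl v : ancestor par v v.
Proof. exact: connect0. Qed.

Lemma anc_trans a b c : ancestor par a b -> ancestor par b c -> ancestor par a c.
Proof. move=> ab bc; exact: (connect_trans bc ab). Qed.

Lemma anc_par v p : par v = Some p -> ancestor par p v.
Proof. by move=> e; apply: connect1; rewrite /par_rel e. Qed.

Lemma anc_inv a v : ancestor par a v ->
  a = v \/ exists2 p, par v = Some p & ancestor par a p.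
Proof.
case/connectP => [[|w q]] /=; first by move=> _ ->; left.
case/andP => /eqP e pq ->; right; exists w => //.
by apply/connectP; exists q.
Qed.

Variables (S : {set V}) (rk : V -> nat).
Hypothesis hC : forall v p, v \in S -> par v = Some p -> (p \in S) && (rk p < rk v).

Lemma anc_in a v : v \in S -> ancestor par a v -> (a \in S) && (rk a <= rk v).
Proof.
move=> vS /connectP[q pq ->] {a}.
elim: q v vS pq => [|w q IH] v vS /=; first by rewrite vS leqnn.
case/andP => /eqP e pq.
case/andP: (hC vS e) => wS lt.
case/andP: (IH w wS pq) => -> le /=.
exact: leq_trans le (ltnW lt).
Qed.

Lemma anc_lt a v : v \in S -> ancestor par a v -> a != v -> rk a < rk v.
Proof.
move=> vS /anc_inv [-> |[p e ap]]; first by rewrite eqxx.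
case/andP: (hC vS e) => pS lt _.
case/andP: (anc_in pS ap) => _ le; exact: leq_ltn_trans le lt.
Qed.

Definition depth v := #|[set z | ancestor par z v]|.

Lemma depth_lt d x : x \in S -> ancestor par d x -> x != d -> depth d < depth x.
Proof.
move=> xS dx xd; apply: proper_card; apply/properP; split.
  apply/subsetP => z; rewrite !inE => zd; exact: anc_trans zd dx.
exists x; first by rewrite inE anc_refl.
rewrite inE; apply/negP => xd'.
have dx' : d != x by rewrite eq_sym.
have l1 := anc_lt xS dx dx'.
have dS : d \in S by case/andP: (anc_in xS dx).
case/andP: (anc_in dS xd') => _ l2.
by move: (leq_ltn_trans l2 l1); rewrite ltnn.
Qed.
End Anc.

Lemma anc_transfer (S : {set V}) (par1 par2 : V -> option V)
  (cl : forall v p, v \in S -> par1 v = Some p -> p \in S)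
  (ag : forall v, v \in S -> par1 v = par2 v) :
  forall a v, v \in S -> ancestor par1 a v = ancestor par2 a v.
Proof.
have cl2 : forall v p, v \in S -> par2 v = Some p -> p \in S.
  by move=> v p vS; rewrite -ag //; exact: cl.
have tr : forall (p1 p2 : V -> option V),
    (forall v p, v \in S -> p1 v = Some p -> p \in S) ->
    (forall v, v \in S -> p1 v = p2 v) ->
    forall q v, v \in S -> path (par_rel p1) v q -> path (par_rel p2) v q.
  move=> p1 p2 c1 a12; elim=> [|w q IH] v vS //=.
  case/andP => /eqP e pq; rewrite /par_rel -a12 // e eqxx /=.
  exact: IH (c1 _ _ vS e) pq.
move=> a v vS; apply/idP/idP.
  case/connectP => q pq ->; apply/connectP; exists q => //; exact: tr pq.
case/connectP => q pq ->; apply/connectP; exists q => //.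
by apply: (tr par2 par1 cl2) pq => // u uS; rewrite ag.
Qed.

Definition Inv (S : {set V}) (par : V -> option V) (rk : V -> nat) : Prop :=
 [/\ forall v p, v \in S -> par v = Some p -> (p \in S) && (rk p < rk v),
     forall r r', r \in S -> r' \in S -> par r = None -> par r' = None -> r = r',
     forall v x y, v \in S -> x \in S -> y \in S -> H v x -> H v y ->
        ancestor par x v -> ancestor par y v -> x != y -> H x y,
     forall v p u, v \in S -> par v = Some p -> u \in S -> H v u ->
        ancestor par v u || (ancestor par u v && ((u == p) || H p u)) &
     forall u v p, u \in S -> v \in S -> u != v -> par u = Some p -> par v = Some p ->
        exists x, [/\ ancestor par x u, ancestor par x v &
                      adjtype black red u x <> adjtype black red v x]].

Lemma chain S par rk x y : Inv S par rk -> x \in S -> y \in S -> H x y ->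
  ancestor par x y || ancestor par y x.
Proof.
case=> _ hR _ h2 _ xS yS Hxy.
case ex: (par x) => [p|].
  by case/orP: (h2 x p y xS ex yS Hxy) => [->|/andP[-> _]] //; rewrite orbT.
case ey: (par y) => [q|].
  rewrite Hsym in Hxy.
  by case/orP: (h2 y q x yS ey xS Hxy) => [->|/andP[-> _]] //; rewrite orbT.
by move: Hxy; rewrite (hR x y xS yS ex ey) Hirr.
Qed.

Lemma adj_H u x : H u x -> adjtype black red u x <> ATNon.
Proof. by rewrite /adjtype /tadj; case: (black u x); case: (red u x). Qed.
Lemma adj_H' u x : adjtype black red u x <> ATNon -> H u x.
Proof. by rewrite /adjtype /tadj; case: (black u x); case: (red u x). Qed.

End Tree.
Section Insert.
Variables (V : finType) (black red : rel V).
Hypothesis Htri : is_trigraph black red.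
Notation H := (tadj black red).
Let Hsym := Hsym Htri.
Let Hirr := Hirr Htri.

Lemma Inv0 (par : V -> option V) (rk : V -> nat) : Inv black red set0 par rk.
Proof. by split=> [v p|r r'|v x y|v p u|u v p]; rewrite inE. Qed.

Lemma insert_single (S : {set V}) (par : V -> option V) (rk : V -> nat) s : S = set0 ->
  exists par' rk', Inv black red (s |: S) par' rk'.
Proof.
move=> ->; exists (fun v => if v == s then None else par v), rk.
have m : forall v, v \in s |: set0 -> v = s by move=> v; rewrite !inE orbF => /eqP.
split.
- by move=> v p /m ->; rewrite eqxx.
- by move=> r r' /m -> /m ->.
- by move=> v x y /m -> /m ->; rewrite Hirr.
- by move=> v p u /m -> _ /m ->; rewrite Hirr.
- by move=> u v p /m -> /m ->; rewrite eqxx.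
Qed.

Lemma insert (S : {set V}) (par : V -> option V) (rk : V -> nat) s : Inv black red S par rk -> s \notin S ->
  (forall x y, x \in S -> y \in S -> H s x -> H s y -> x != y -> H x y) ->
  exists par' rk', Inv black red (s |: S) par' rk'.
Proof.
move=> I sS Kcl.
case: (set_0Vmem S) => [S0|[z zS]]; first exact: insert_single.
have I' := I; case: I' => hC hR h1 h2 h3.
have cl : forall v p, v \in S -> par v = Some p -> p \in S.
  by move=> v p vS e; case/andP: (hC v p vS e).
set K := [set x in S | H s x].
have KP : forall x, (x \in K) = (x \in S) && H s x by move=> x; rewrite /K inE.
set W := [pred w | (w \in S) && [forall x in K, ancestor par x w && ((x == w) || H w x)]].
have Wne : exists w, W w.
  case: (set_0Vmem K) => [K0|[d0 d0K]].
    exists z; rewrite /W /= zS /=; apply/forall_inP => x; by rewrite K0 inE.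
  have [d dK dmax] := @arg_maxnP _ d0 (mem K) (depth par) d0K.
  have dK' : d \in K := dK.
  exists d; have dS : d \in S by move: dK'; rewrite KP => /andP[].
  rewrite /W /= dS /=; apply/forall_inP => x xK.
  have xS : x \in S by move: xK; rewrite KP => /andP[].
  case: (eqVneq x d) => [->|xd]; first by rewrite anc_refl ?eqxx.
  have Hxd : H x d.
    apply: Kcl => //; [by move: xK; rewrite KP => /andP[] | by move: dK'; rewrite KP => /andP[]].
  rewrite Hsym Hxd orbT andbT.
  case/orP: (chain Htri I xS dS Hxd) => // dx.
  have := depth_lt hC xS dx xd; have := dmax x xK; rewrite /geq => a b.
  by move: (leq_ltn_trans a b); rewrite ltnn.
case: Wne => w0 Ww0.
have [w Ww wmax] := @arg_maxnP _ w0 W (depth par) Ww0.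
have wS : w \in S by case/andP: Ww.
have ws : w != s by apply/eqP => e; move: sS; rewrite -e wS.
have WK : forall x, x \in K -> ancestor par x w && ((x == w) || H w x).
  by case/andP: Ww => _ /forall_inP.
have key : forall v, v \in S -> par v = Some w ->
    exists x, ancestor par x w /\ adjtype black red s x <> adjtype black red v x.
  move=> v vS e; apply: NNPP => nx.
  have eq : forall x, ancestor par x w -> adjtype black red s x = adjtype black red v x.
    move=> x xw; apply: NNPP => ne; apply: nx; by exists x.
  have Wv : W v.
    rewrite /W /= vS /=; apply/forall_inP => x xK.
    case/andP: (WK x xK) => xw _.
    rewrite (anc_trans xw (anc_par e)) /=.
    apply/orP; right; apply: adj_H'; rewrite -eq //.
    apply: adj_H; by move: xK; rewrite KP => /andP[].
  have vw : v != w.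
    by apply/eqP => e'; move: (hC v w vS e); rewrite e' ltnn andbF.
  have := depth_lt hC vS (anc_par e) vw; have := wmax v Wv; rewrite /geq => a b.
  by move: (leq_ltn_trans a b); rewrite ltnn.
pose par' v := if v == s then Some w else par v.
pose rk' v := if v == s then (rk w).+1 else rk v.
exists par', rk'.
have vs : forall v, v \in S -> v != s by move=> v vS; apply/eqP => e; move: sS; rewrite -e vS.
have ag : forall v, v \in S -> par v = par' v by move=> v vS; rewrite /par' (negbTE (vs v vS)).
have ancS : forall a v, v \in S -> ancestor par' a v = ancestor par a v.
  by move=> a v vS; apply/esym/(anc_transfer cl ag).
have ancs : forall a, ancestor par' a s = (a == s) || ancestor par a w.
  move=> a; apply/idP/idP.
    case/anc_inv => [->|[p]]; first by rewrite eqxx.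
    by rewrite /par' eqxx => -[<-]; rewrite ancS // => ->; rewrite orbT.
  case/orP => [/eqP ->|aw]; first exact: anc_refl.
  apply: (anc_trans (b := w)); first by rewrite ancS.
  by apply: anc_par; rewrite /par' eqxx.
have inS : forall v, v \in s |: S -> v = s \/ (v \in S /\ v != s).
  move=> v; rewrite !inE => /orP[/eqP ->|vS]; [by left | right; split=> //; exact: vs].
have par's : par' s = Some w by rewrite /par' eqxx.
have par'S : forall v, v \in S -> par' v = par v by move=> v vS; rewrite ag.
have rk'S : forall v, v \in S -> rk' v = rk v by move=> v vS; rewrite /rk' (negbTE (vs v vS)).
split.
- move=> v p /inS [->|[vS _]].
    rewrite par's => -[<-]; rewrite !inE wS orbT /= /rk' eqxx (negbTE ws); exact: ltnSn.
  rewrite par'S // => e; case/andP: (hC v p vS e) => pS lt.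
  by rewrite !inE pS orbT /= rk'S // rk'S.
- move=> r r' /inS [->|[rS _]]; first by rewrite par's.
  move=> /inS [->|[r'S _]]; first by rewrite par's.
  rewrite !par'S //; exact: hR.
- move=> v x y /inS [->|[vS _]].
    move=> /inS [->|[xS _]]; first by rewrite Hirr.
    move=> /inS [->|[yS _]]; first by move=> _; rewrite Hirr.
    move=> Hsx Hsy _ _; exact: Kcl.
  move=> _ _ Hvx Hvy; rewrite !ancS // => ax ay.
  have xS : x \in S by case/andP: (anc_in hC vS ax).
  have yS : y \in S by case/andP: (anc_in hC vS ay).
  exact: (h1 v x y vS xS yS Hvx Hvy ax ay).
- move=> v p u /inS [->|[vS _]].
    rewrite par's => -[<-] /inS [->|[uS _]]; first by rewrite Hirr.
    move=> Hsu; have uK : u \in K by rewrite KP uS Hsu.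
    case/andP: (WK u uK) => uw uw2; by rewrite ancs uw uw2 !orbT.
  rewrite par'S // => e /inS [->|[uS _]].
    move=> Hvs; have vK : v \in K by rewrite KP vS Hsym Hvs.
    by case/andP: (WK v vK) => vw _; rewrite ancs vw orbT.
  by rewrite !ancS //; exact: h2.
- move=> u v p /inS [->|[uS _]] /inS [->|[vS _]].
  + by rewrite eqxx.
  + move=> _; rewrite par's => -[<-]; rewrite par'S // => e.
    case: (key v vS e) => x [xw ne]; exists x; split=> //.
      by rewrite ancs xw orbT.
    by rewrite ancS //; exact: anc_trans xw (anc_par e).
  + move=> _; rewrite par'S // => e; rewrite par's => -[ew]; subst p.
    case: (key u uS e) => x [xw ne]; exists x; split=> //.
      by rewrite ancS //; exact: anc_trans xw (anc_par e).
      by rewrite ancs xw orbT.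
    by move=> h; apply: ne.
  + rewrite !par'S // => uv eu ev.
    case: (h3 u v p uS vS uv eu ev) => x [xu xv ne]; exists x.
    by rewrite !ancS.
Qed.
End Insert.
Lemma build (V : finType) (black red : rel V) :
  is_trigraph black red -> chordal_trigraph black red ->
  forall n (S : {set V}), #|S| <= n ->
  exists (par : V -> option V) (rk : V -> nat), Inv black red S par rk.
Proof.
move=> Htri Hch; elim=> [|n IH] S cS.
  have S0 : S = set0 by apply: cards0_eq; apply/eqP; rewrite -leqn0.
  by exists (fun _ => None), (fun _ => 0); rewrite S0; apply: Inv0.
case: (eqVneq S set0) => [S0|Sn0].
  by exists (fun _ => None), (fun _ => 0); rewrite S0; apply: Inv0.
case: (simplicial_exists Htri Hch Sn0) => s sS ss.
have cS0 : #|S :\ s| <= n.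
  by move: cS; rewrite (cardsD1 s S) sS add1n ltnS.
case: (IH _ cS0) => par [rk I].
have sS0 : s \notin S :\ s by rewrite !inE eqxx.
have := insert Htri I sS0.
rewrite (setD1K sS); apply=> x y; rewrite !inE => /andP[_ xS] /andP[_ yS].
exact: ss.
Qed.

Theorem lemma3p1 (V : finType) (black red : rel V) :
  is_trigraph black red -> chordal_trigraph black red ->
  exists par : V -> option V, tree_representation black red par.
Proof.
move=> Htri Hch.
case: (build Htri Hch (leqnn #|[set: V]|)) => par [rk [hC hR h1 h2 h3]].
exists par; split.
- split.
    move=> v; move: {2}(rk v) (leqnn (rk v)) => n; elim: n v => [|n IH] v.
      case e: (par v) => [p|] lv0; last by exists v => //; exact: anc_refl.
      by case/andP: (hC v p (in_setT v) e) => _ lt; move: (leq_trans lt lv0).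
    case e: (par v) => [p|] lv; last by exists v => //; exact: anc_refl.
    case/andP: (hC v p (in_setT v) e) => _ lt.
    case: (IH p _); first by rewrite -ltnS; exact: leq_trans lt lv.
    move=> r er rp; exists r => //; exact: anc_trans rp (anc_par e).
  move=> r r'; exact: hR (in_setT r) (in_setT r').
- move=> v x y /andP[Hvx ax] /andP[Hvy ay].
  exact: h1 (in_setT v) (in_setT x) (in_setT y) Hvx Hvy ax ay.
- move=> v p e u Hvu; exact: h2 (in_setT v) e (in_setT u) Hvu.
- move=> u v p uv eu ev; exact: h3 (in_setT u) (in_setT v) uv eu ev.
Qed.
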